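(* For all integers $m,r,n\ge 0$ and all real $x\neq 0$, $$H_{m+r,n}(x)=m!\sum_{k=0}^{m}\frac{(-1)^k}{k!}\,\frac{H_{m-k,n}(x)}{(m-k)!}\,\frac{d^k}{dx^k}\!\left(x^{-n}H_{r,n}(x)\right).$$
   Context: For integers $m,n\ge 0$, the two-index Hermite polynomial is $H_{m,n}(x)=\left(-\frac{d}{dx}+2x\right)^m(x^n)$, i.e. the operator $f\mapsto -f'+2xf$ applied $m$ times to $x^n$. *)

(* Defs.v *)
From Stdlib Require Import Reals List.
Import ListNotations.
Open Scope R_scope.

(* Real polynomials as coefficient lists, lowest degree first. *)
Fixpoint peval (p : list R) (x : R) : R :=
  match p with
  | nil => 0
  | a :: q => a + x * peval q x
  end.

Fixpoint padd (p q : list R) : list R :=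
  match p, q with
  | nil, _ => q
  | _, nil => p
  | a :: p', b :: q' => (a + b) :: padd p' q'
  end.

Fixpoint pderiv_aux (k : nat) (p : list R) : list R :=
  match p with
  | nil => nil
  | a :: q => (INR k * a) :: pderiv_aux (S k) q
  end.

Definition pderiv (p : list R) : list R :=
  match p with
  | nil => nil
  | _ :: q => pderiv_aux 1 q
  end.

(* the operator f |-> -f' + 2 x f on polynomials *)
Definition hop (p : list R) : list R :=
  padd (map Ropp (pderiv p)) (0 :: map (Rmult 2) p).

Definition Xn (n : nat) : list R := repeat 0 n ++ [1].

Definition Hpoly (m n : nat) : list R := Nat.iter m hop (Xn n).
Definition H (m n : nat) (x : R) : R := peval (Hpoly m n) x.

(* Main.v *)
Require Import Defs.
From Stdlib Require Import Reals Arith Lra Lia List.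
Import ListNotations.
Open Scope R_scope.

Lemma peval_padd p q x : peval (padd p q) x = peval p x + peval q x.
Proof.
  revert q; induction p as [|a p IH]; intros [|b q]; simpl; try ring.
  rewrite IH; ring.
Qed.

Lemma peval_opp p x : peval (map Ropp p) x = - peval p x.
Proof. induction p; simpl; try rewrite IHp; ring. Qed.

Lemma peval_mul2 p x : peval (map (Rmult 2) p) x = 2 * peval p x.
Proof. induction p; simpl; try rewrite IHp; ring. Qed.

Lemma pderiv_aux_S q k x :
  peval (pderiv_aux (S k) q) x = peval (pderiv_aux k q) x + peval q x.
Proof.
  revert k; induction q as [|a q IH]; intro k; simpl; [ring|].
  rewrite IH. change (INR (S k) * a + x * (peval (pderiv_aux (S k) q) x + peval q x) = INR k * a + x * peval (pderiv_aux (S k) q) x + (a + x * peval q x)). rewrite S_INR. ring.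
Qed.

Lemma pderiv_cons a q x :
  peval (pderiv (a :: q)) x = peval q x + x * peval (pderiv q) x.
Proof.
  unfold pderiv. rewrite pderiv_aux_S.
  destruct q as [|b q]; simpl; [ring|]. ring.
Qed.

Lemma peval_deriv p x : derivable_pt_lim (peval p) x (peval (pderiv p) x).
Proof.
  induction p as [|a q IH].
  - simpl. apply derivable_pt_lim_const.
  - rewrite pderiv_cons.
    replace (peval q x + x * peval (pderiv q) x) with
      (0 + (1 * peval q x + x * peval (pderiv q) x)) by ring.
    apply (derivable_pt_lim_plus (fun _ => a) (fun y => y * peval q y)).
    + apply derivable_pt_lim_const.
    + apply (derivable_pt_lim_mult id (peval q)); [apply derivable_pt_lim_id | exact IH].
Qed.

Definition DH (j n : nat) (x : R) := peval (pderiv (Hpoly j n)) x.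

Lemma H_deriv j n x : derivable_pt_lim (H j n) x (DH j n x).
Proof. apply peval_deriv. Qed.

Lemma H_S j n x : H (S j) n x = - DH j n x + 2 * x * H j n x.
Proof.
  unfold H, DH. change (Hpoly (S j) n) with (hop (Hpoly j n)).
  unfold hop. rewrite peval_padd, peval_opp. simpl. rewrite peval_mul2. ring.
Qed.

Lemma H_0 n x : H 0 n x = x ^ n.
Proof.
  unfold H, Hpoly, Xn. simpl. induction n; simpl; [ring|]. rewrite IHn; ring.
Qed.

Fixpoint T (m : nat) (a : nat -> nat -> R) : R :=
  match m with
  | O => a O O
  | S p => T p (fun j k => a (S j) k) - T p (fun j k => a j (S k))
  end.

Lemma T_ext m a b : (forall j k, a j k = b j k) -> T m a = T m b.
Proof.
  revert a b; induction m; intros a b E; simpl; [apply E|].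
  rewrite (IHm _ (fun j k => b (S j) k)), (IHm (fun j k => a j (S k)) (fun j k => b j (S k))); auto.
Qed.

Lemma T_lin m p q a b :
  T m (fun j k => p * a j k + q * b j k) = p * T m a + q * T m b.
Proof.
  revert a b; induction m; intros a b; simpl; [ring|].
  rewrite (IHm (fun j k => a (S j) k) (fun j k => b (S j) k)).
  rewrite (IHm (fun j k => a j (S k)) (fun j k => b j (S k))). ring.
Qed.

Lemma T_deriv m (A : nat -> nat -> R -> R) (A' : nat -> nat -> R) y :
  (forall j k, derivable_pt_lim (A j k) y (A' j k)) ->
  derivable_pt_lim (fun z => T m (fun j k => A j k z)) y (T m A').
Proof.
  revert A A'; induction m; intros A A' HA; simpl; [apply HA|].
  apply (derivable_pt_lim_minus (fun z => T m (fun j k => A (S j) k z))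
     (fun z => T m (fun j k => A j (S k) z))).
  - apply (IHm (fun j k => A (S j) k)). intros; apply HA.
  - apply (IHm (fun j k => A j (S k))). intros; apply HA.
Qed.

Lemma deriv_loc (f h : R -> R) y l d : 0 < d ->
  (forall z, Rabs (z - y) < d -> f z = h z) ->
  derivable_pt_lim f y l -> derivable_pt_lim h y l.
Proof.
  intros Hd E Hf eps Heps.
  destruct (Hf eps Heps) as [del Hdel].
  assert (Hp : 0 < Rmin del d) by (apply Rmin_pos; [apply cond_pos|exact Hd]).
  exists (mkposreal _ Hp). intros hh Hh0 Hh. simpl in Hh.
  rewrite <- (E (y + hh)), <- (E y).
  - apply Hdel; auto. apply Rlt_le_trans with (1 := Hh), Rmin_l.
  - replace (y - y) with 0 by ring. rewrite Rabs_R0; exact Hd.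
  - replace (y + hh - y) with hh by ring. apply Rlt_le_trans with (1 := Hh), Rmin_r.
Qed.

Fixpoint bin (m k : nat) : R :=
  match m, k with
  | O, O => 1
  | O, S _ => 0
  | S _, O => 1
  | S p, S q => bin p q + bin p (S q)
  end.

Lemma bin_big m k : (m < k)%nat -> bin m k = 0.
Proof.
  revert k; induction m; intros [|k] Hk; simpl; try lia; auto.
  rewrite !IHm; try lia. ring.
Qed.

Lemma C_nn n : C n n = 1.
Proof. unfold C. rewrite Nat.sub_diag. simpl. field. apply INR_fact_neq_0. Qed.

Lemma C_n0 n : C n 0 = 1.
Proof. unfold C. rewrite Nat.sub_0_r. simpl. field. apply INR_fact_neq_0. Qed.

Lemma bin_C m k : (k <= m)%nat -> bin m k = C m k.
Proof.
  revert k; induction m; intros [|k] Hk.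
  - simpl. rewrite C_n0; auto.
  - lia.
  - simpl. rewrite C_n0; auto.
  - simpl. destruct (Nat.eq_dec k m) as [->|Hne].
    + rewrite (bin_big m (S m)) by lia. rewrite IHm by lia. rewrite !C_nn. ring.
    + rewrite !IHm by lia. apply pascal. lia.
Qed.

Lemma T_sum m a :
  T m a = sum_f_R0 (fun k => bin m k * (-1) ^ k * a (m - k)%nat k) m.
Proof.
  revert a; induction m; intro a.
  - simpl. ring.
  - change (T (S m) a) with (T m (fun j k => a (S j) k) - T m (fun j k => a j (S k))).
    rewrite !IHm.
    rewrite (decomp_sum _ (S m)) by lia. simpl Init.Nat.pred.
    change (bin (S m) 0) with 1. rewrite Nat.sub_0_r.
    assert (E : forall i, bin (S m) (S i) * (-1) ^ (S i) * a (S m - S i)%nat (S i)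
             = bin m (S i) * (-1) ^ (S i) * a (m - i)%nat (S i)
               - bin m i * (-1) ^ i * a (m - i)%nat (S i)).
    { intro i. simpl bin. simpl Nat.sub. simpl pow. ring. }
    rewrite (sum_eq _ _ _ (fun i _ => E i)), minus_sum.
    destruct m as [|p].
    + simpl. ring.
    + rewrite (decomp_sum _ (S p)) by lia. simpl Init.Nat.pred.
      rewrite (tech5 (fun i => bin (S p) (S i) * (-1) ^ S i * a (S p - i)%nat (S i))).
      rewrite (bin_big (S p) (S (S p))) by lia.
      rewrite (sum_eq (fun i => bin (S p) (S i) * (-1) ^ S i * a (S (S p - S i)) (S i))
                      (fun i => bin (S p) (S i) * (-1) ^ S i * a (S p - i)%nat (S i)) p).
      * rewrite Nat.sub_0_r. change (bin (S p) 0) with 1. ring.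
      * intros i Hi. do 2 f_equal. lia.
Qed.

Lemma claim (r n : nat) (g : nat -> R -> R)
  (hg0 : forall y, y <> 0 -> g 0%nat y = / (y ^ n) * H r n y)
  (hgS : forall (k : nat) (y : R), y <> 0 -> derivable_pt_lim (g k) y (g (S k) y)) :
  forall m y, y <> 0 -> H (m + r) n y = T m (fun j k => H j n y * g k y).
Proof.
  induction m; intros y hy.
  - simpl. rewrite hg0 by auto. rewrite H_0. field. apply pow_nonzero; auto.
  - assert (Hd : derivable_pt_lim (fun z => T m (fun j k => H j n z * g k z)) y
            (T m (fun j k => DH j n y * g k y + H j n y * g (S k) y))).
    { apply (T_deriv m (fun j k z => H j n z * g k z)). intros j k.
      apply (derivable_pt_lim_mult (H j n) (g k)); [apply H_deriv | apply hgS; auto]. }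
    assert (Hd2 : derivable_pt_lim (H (m + r) n) y
            (T m (fun j k => DH j n y * g k y + H j n y * g (S k) y))).
    { apply (deriv_loc _ _ y _ (Rabs y)) with (3 := Hd).
      - apply Rabs_pos_lt; auto.
      - intros z Hz. symmetry. apply IHm. intro Hz0. subst z.
        rewrite Rminus_0_l, Rabs_Ropp in Hz. lra. }
    pose proof (uniqueness_limite _ _ _ _ (H_deriv (m + r) n y) Hd2) as EDH.
    change (S m + r)%nat with (S (m + r)). rewrite H_S, EDH, IHm by auto.
    simpl T.
    rewrite (T_ext m (fun j k => DH j n y * g k y + H j n y * g (S k) y)
               (fun j k => 1 * (DH j n y * g k y) + 1 * (H j n y * g (S k) y)))
      by (intros; ring).
    rewrite (T_ext m (fun j k => H (S j) n y * g k y)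
               (fun j k => (-1) * (DH j n y * g k y) + (2 * y) * (H j n y * g k y)))
      by (intros; rewrite H_S; ring).
    rewrite !T_lin. ring.
Qed.

Theorem mainTheorem16 (m r n : nat) (x : R) (hx : x <> 0)
  (g : nat -> R -> R)
  (hg0 : forall y, y <> 0 -> g 0%nat y = / (y ^ n) * H r n y)
  (hgS : forall (k : nat) (y : R), y <> 0 -> derivable_pt_lim (g k) y (g (S k) y)) :
  H (m + r) n x =
  INR (Factorial.fact m) *
  sum_f_R0 (fun k => (-1) ^ k / INR (Factorial.fact k) * (H (m - k) n x / INR (Factorial.fact (m - k))) * g k x) m.
Proof.
  rewrite (claim r n g hg0 hgS m x hx), T_sum, scal_sum.
  apply sum_eq. intros i Hi. rewrite bin_C by auto. unfold C.
  field. split; apply INR_fact_neq_0.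
Qed.
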